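(* Let $x,y,z$ be nodes of a finite, connected, unweighted, undirected graph, and suppose some node $c$ is a Condorcet winner for $\{x,y,z\}$. Then $c$ lies on a shortest path between $x$ and $y$, on a shortest path between $x$ and $z$, and on a shortest path between $y$ and $z$.
   Context: $d$ is the shortest-path distance. A node $c$ is a Condorcet winner for a set $S$ if for every other node $y'$, $\lvert\{u\in S: d(u,c)<d(u,y')\}\rvert > \lvert\{u\in S: d(u,y')<d(u,c)\}\rvert$. *)

(* Defs.v *)
From mathcomp Require Import all_boot.
Set Implicit Arguments. Unset Strict Implicit. Unset Printing Implicit Defensive.

Section Graph.
Variables (T : finType) (e : rel T).

Definition simple_graph := symmetric e /\ irreflexive e.
Definition connected_graph := forall u v : T, connect e u v.

Definition has_walk (n : nat) (u v : T) : bool :=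
  [exists p : n.-tuple T, path e u p && (last u p == v)].

(* shortest-path distance: least n with a walk of length n
   (searched in 0 .. #|T|-1, which suffices in a connected graph) *)
Definition dist (u v : T) : nat :=
  find (fun n => has_walk n u v) (iota 0 #|T|).

Definition on_shortest_path (c u v : T) : Prop :=
  exists p : seq T, [/\ path e u p, last u p = v, size p = dist u v
                      & c \in u :: p].

Definition condorcet_winner (S : {set T}) (c : T) : Prop :=
  forall y' : T, y' != c ->
    #|[set u in S | dist u c < dist u y']| > #|[set u in S | dist u y' < dist u c]|.
End Graph.

(* Main.v *)
Require Import Defs.
From mathcomp Require Import all_boot.
From mathcomp Require Import zify.

Section Aux.
Variables (T : finType) (e : rel T).
Hypothesis esym : symmetric e.
Hypothesis econ : connected_graph e.

Lemma walkP n u v :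
  reflect (exists p, [/\ path e u p, last u p = v & size p = n]) (has_walk e n u v).
Proof.
apply: (iffP existsP).
  by case=> t /andP[Hp /eqP Hl]; exists (val t); rewrite size_tuple.
case=> p [Hp Hl Hs]; have Hs' : size p == n by apply/eqP.
by exists (Tuple Hs'); rewrite /= Hp Hl eqxx.
Qed.

Lemma walk_short u v : exists n, (n < #|T|) && has_walk e n u v.
Proof.
have /connectP[p Hp Hl] := econ u v.
case: (shortenP Hp) Hl => p' Hp' Hu _ Hl.
exists (size p'); apply/andP; split; last by apply/walkP; exists p'.
have := max_card (mem (u :: p')); have /card_uniqP -> := Hu; rewrite /=; lia.
Qed.

Lemma dist_walk u v : has_walk e (dist e u v) u v.
Proof.
have [n /andP[Hn Hw]] := walk_short u v.
have Hh : has (fun n => has_walk e n u v) (iota 0 #|T|).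
  by apply/hasP; exists n => //; rewrite mem_iota.
have := nth_find 0 Hh; rewrite nth_iota //.
by move: Hh; rewrite has_find size_iota.
Qed.

Lemma dist_min n u v : has_walk e n u v -> dist e u v <= n.
Proof.
move=> Hw; rewrite leqNgt; apply/negP => Hlt.
case: (ltnP n #|T|) => Hn.
  by have := before_find 0 Hlt; rewrite nth_iota // Hw.
have := find_size (fun n => has_walk e n u v) (iota 0 #|T|).
rewrite size_iota -/(dist e u v); lia.
Qed.

Lemma dist_exP u v : exists p, [/\ path e u p, last u p = v & size p = dist e u v].
Proof. exact/walkP/dist_walk. Qed.

Lemma dist_tri a b c : dist e a b <= dist e a c + dist e c b.
Proof.
have [p [Hp Hl Hs]] := dist_exP a c.
have [q [Hq Hl' Hs']] := dist_exP c b.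
apply: dist_min; apply/walkP; exists (p ++ q).
by rewrite cat_path last_cat Hl Hp Hq size_cat Hs Hs'.
Qed.

Lemma last_rev_belast (u : T) p : last (last u p) (rev (belast u p)) = u.
Proof. by case: p => //= y p; rewrite rev_cons last_rcons. Qed.

Lemma dist_sym u v : dist e u v = dist e v u.
Proof.
suff H : forall u v, dist e v u <= dist e u v.
  by apply/eqP; rewrite eqn_leq !H.
move=> a b; have [p [Hp Hl Hs]] := dist_exP a b.
apply: dist_min; apply/walkP; exists (rev (belast a p)); split.
- rewrite -Hl rev_path; rewrite (@eq_path _ _ e) // => x y; exact: esym.
- by rewrite -Hl last_rev_belast.
- by rewrite size_rev size_belast.
Qed.

Lemma split_walk a b k : k <= dist e a b ->
  exists w, dist e a w <= k /\ dist e w b <= dist e a b - k.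
Proof.
move=> Hk; have [p [Hp Hl Hs]] := dist_exP a b.
exists (last a (take k p)); split.
  apply: dist_min; apply/walkP; exists (take k p); split=> //.
  - by move: Hp; rewrite -{1}(cat_take_drop k p) cat_path => /andP[].
  - by rewrite size_take Hs; case: ltngtP Hk => //; lia.
apply: dist_min; apply/walkP; exists (drop k p); split.
- by move: Hp; rewrite -{1}(cat_take_drop k p) cat_path => /andP[].
- by rewrite -last_cat cat_take_drop.
- by rewrite size_drop Hs.
Qed.

Lemma on_sp_of c a b : dist e a c + dist e c b = dist e a b -> on_shortest_path e c a b.
Proof.
move=> H; have [p [Hp Hl Hs]] := dist_exP a c.
have [q [Hq Hl' Hs']] := dist_exP c b.
exists (p ++ q); split.
- by rewrite cat_path Hp Hl Hq.
- by rewrite last_cat Hl.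
- by rewrite size_cat Hs Hs'.
- case: p Hp Hl {Hs} => [|y p] _ Hl; first by rewrite /= -Hl mem_head.
  by rewrite -cat_cons mem_cat -Hl mem_last.
Qed.

Lemma key (S : {set T}) a b c :
  a \in S -> b \in S -> #|S :\ a :\ b| <= 1 ->
  condorcet_winner e S c -> on_shortest_path e c a b.
Proof.
move=> Ha Hb HS Hc.
have Ht := dist_tri a b c.
case: (ltngtP (dist e a b) (dist e a c + dist e c b)) => H;
  last exact: on_sp_of; last first.
  have := dist_tri a c b; lia.
exfalso.
have Hk : minn (dist e a c) (dist e a b) <= dist e a b by apply: geq_minr.
have [w [Hw1 Hw2]] := @split_walk a b _ Hk.
rewrite (dist_sym w b) in Hw2.
have Hbc : dist e b w < dist e b c.
  have := dist_tri a c b; rewrite (dist_sym c b) (dist_sym b c) in H *; lia.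
have Hwc : w != c by apply/eqP => E; rewrite E ltnn in Hbc.
have := Hc w Hwc.
have -> : #|[set u in S | dist e u c < dist e u w]| = 0 + #|[set u in S | dist e u c < dist e u w]| by [].
apply/negP; rewrite -leqNgt.
apply: (@leq_trans 1).
  apply: (leq_trans _ HS); apply: subset_leq_card; apply/subsetP => u.
  rewrite !inE => /andP[HuS Hu]; rewrite HuS andbT.
  apply/andP; split; apply/eqP => E; subst u.
    by move: Hbc; rewrite ltnNge ltnW.
  move: Hu; rewrite ltnNge => /negP; apply; apply: (leq_trans Hw1); exact: geq_minl.
by apply/card_gt0P; exists b; rewrite inE Hb Hbc.
Qed.

End Aux.

Theorem lemmaE1 (T : finType) (e : rel T) (x y z c : T) :
  simple_graph e -> connected_graph e ->
  condorcet_winner e [set x; y; z] c ->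
  [/\ on_shortest_path e c x y, on_shortest_path e c x z
    & on_shortest_path e c y z].
Proof.
move=> [Hs _] Hc Hw.
have sub1 : forall a b w, [set x; y; z] :\ a :\ b \subset [set w] ->
  #|[set x; y; z] :\ a :\ b| <= 1.
  by move=> a b w Hsub; rewrite -(cards1 w); apply: subset_leq_card.
have F : forall u a b w, u \in [set x; y; z] :\ a :\ b -> 
  (u = x -> u == w) -> (u = y -> u == w) -> (u = z -> u == w) -> u == w.
  move=> u a b w; rewrite !inE => /andP[_ /andP[_ H]] H1 H2 H3. by case/orP: H => [/orP[]|] /eqP; auto.
split.
- apply: (@key T e Hs Hc [set x; y; z] x y c); rewrite ?inE ?eqxx ?orbT //.
  apply: (sub1 _ _ z); apply/subsetP => u Hu; rewrite inE; apply: (F u x y) => // E;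
    subst u; move: Hu; rewrite !inE eqxx ?andbF //.
- apply: (@key T e Hs Hc [set x; y; z] x z c); rewrite ?inE ?eqxx ?orbT //.
  apply: (sub1 _ _ y); apply/subsetP => u Hu; rewrite inE; apply: (F u x z) => // E;
    subst u; move: Hu; rewrite !inE eqxx ?andbF //.
- apply: (@key T e Hs Hc [set x; y; z] y z c); rewrite ?inE ?eqxx ?orbT //.
  apply: (sub1 _ _ x); apply/subsetP => u Hu; rewrite inE; apply: (F u y z) => // E;
    subst u; move: Hu; rewrite !inE eqxx ?andbF //.
Qed.
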